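(* Let $S$ be a nonempty finite set of graphs on $\Pi$ and $A$ the closed-above model generated by $S$. Then the uninterpreted complex of $A$ is $(n-2)$-connected.
   Context: $\Pi=\{p_1,\dots,p_n\}$. A graph is a directed graph on vertex set $\Pi$ containing all self-loops; $In_G(p)=\{q:(q,p)\in E(G)\}$. $\uparrow G=\{H: E(H)\supseteq E(G)\}$; the closed-above model generated by $S$ is the oblivious model whose set of allowed round graphs is $\bigcup_{G\in S}\uparrow G$. A (colored) simplex is a set $\sigma$ of pairs $(p,v)$ with $p\in\Pi$ such that each $p$ appears in at most one pair; a complex is a set of simplexes closed under taking subsets. The uninterpreted simplex of a graph $H$ is $\sigma_H=\{(p,In_H(p)):p\in\Pi\}$; the uninterpreted complex of an oblivious model with allowed graph set $\mathcal{S}$ is the complex whose facets are exactly the $\sigma_H$, $H\in\mathcal{S}$. A complex is $k$-connected if it is nonempty for $k\ge -1$ and every continuous map from the $m$-sphere into its geometric realization extends to the $(m+1)$-disk for all $0\le m\le k$; every complex is $k$-connected for $k\le -2$. *)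

(* Defs.v *)
From mathcomp Require Import all_boot.
From Stdlib Require Import Reals ZArith.
Set Implicit Arguments. Unset Strict Implicit. Unset Printing Implicit Defensive.

(** Processes: Pi = 'I_n.  A graph is an edge set containing all self-loops. *)
Definition edges (n : nat) := {set 'I_n * 'I_n}.

Definition is_graph (n : nat) (G : edges n) : Prop :=
  forall p : 'I_n, (p, p) \in G.

Definition In_G (n : nat) (G : edges n) (p : 'I_n) : {set 'I_n} :=
  [set q | (q, p) \in G].

Definition closed_above_allowed (n : nat) (S : {set edges n}) (H : edges n) : Prop :=
  is_graph H /\ exists2 G, G \in S & G \subset H.

(** Vertices of (uninterpreted) simplexes: pairs (process, view). *)
Definition vertex (n : nat) : finType := ('I_n * {set 'I_n})%type.

Definition unint_simplex (n : nat) (H : edges n) : {set vertex n} :=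
  [set (p, In_G H p) | p : 'I_n].

Definition unint_complex (n : nat) (allowed : edges n -> Prop) (s : {set vertex n}) : Prop :=
  exists2 H, allowed H & s \subset unint_simplex H.

Local Open Scope R_scope.

Definition Rsum (I : finType) (f : I -> R) : R := \big[Rplus/R0]_(i : I) f i.

(** Geometric realization of a complex K on a finite vertex type V:
    barycentric coordinate functions whose support is a simplex of K. *)
Definition realization (V : finType) (K : {set V} -> Prop) (x : V -> R) : Prop :=
  (forall v, 0 <= x v) /\ Rsum x = 1 /\
  exists2 s, K s & (forall v, x v <> 0 -> v \in s).

Definition euclid_dist (d : nat) (x y : 'I_d -> R) : R :=
  sqrt (Rsum (fun i => (x i - y i) ^ 2)).

Definition sphere (m : nat) (x : 'I_m.+1 -> R) : Prop := Rsum (fun i => x i ^ 2) = 1.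
Definition disk (m : nat) (x : 'I_m -> R) : Prop := Rsum (fun i => x i ^ 2) <= 1.

(** Continuity of f : D -> R^V (product topology = coordinatewise),
    D a subspace of R^d with the Euclidean metric. *)
Definition continuous_on (d : nat) (V : finType) (D : ('I_d -> R) -> Prop)
    (f : ('I_d -> R) -> V -> R) : Prop :=
  forall x, D x -> forall eps, 0 < eps -> exists2 delta, 0 < delta &
    forall y, D y -> euclid_dist x y < delta -> forall v, Rabs (f y v - f x v) < eps.

Definition k_connected (V : finType) (K : {set V} -> Prop) (k : Z) : Prop :=
  ((-1 <= k)%Z -> exists x, realization K x) /\
  forall m : nat, (Z.of_nat m <= k)%Z ->
    forall f : ('I_m.+1 -> R) -> V -> R,
      continuous_on (@sphere m) f ->
      (forall x, sphere x -> realization K (f x)) ->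
      exists g : ('I_m.+1 -> R) -> V -> R,
        continuous_on (@disk m.+1) g /\
        (forall x, disk x -> realization K (g x)) /\
        (forall x, sphere x -> g x = f x).

(* Main.v *)
From HB Require Import structures.
Require Import Defs.
From mathcomp Require Import all_boot.
From Stdlib Require Import Reals ZArith Lra Lia.
From Stdlib Require Import ClassicalEpsilon Classical FunctionalExtensionality.
From Coquelicot Require Compactness.
From mathcomp Require Import ssreflect ssrfun ssrbool eqtype ssrnat seq fintype bigop finset finfun.
From mathcomp Require Import zify_ssreflect.
Set Implicit Arguments. Unset Strict Implicit. Unset Printing Implicit Defensive.
Open Scope R_scope.

Lemma Rplus_A : associative Rplus. Proof. move=> *; ring. Qed.
Lemma Rmult_A : associative Rmult. Proof. move=> *; ring. Qed.
HB.instance Definition _ := Monoid.isComLaw.Build R R0 Rplus Rplus_A Rplus_comm Rplus_0_l.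
HB.instance Definition _ := Monoid.isComLaw.Build R R1 Rmult Rmult_A Rmult_comm Rmult_1_l.
HB.instance Definition _ := Monoid.isMulLaw.Build R R0 Rmult Rmult_0_l Rmult_0_r.
HB.instance Definition _ := Monoid.isAddLaw.Build R Rmult Rplus Rmult_plus_distr_r Rmult_plus_distr_l.

Lemma Rsum_ge0 (I : finType) (f : I -> R) : (forall i, 0 <= f i) -> 0 <= Rsum f.
Proof. move=> H; rewrite /Rsum; apply: (big_ind (fun x => 0 <= x)) => //; [lra| move=> *; lra]. Qed.

Lemma Rsum_le (I : finType) (f g : I -> R) : (forall i, f i <= g i) -> Rsum f <= Rsum g.
Proof. move=> H; rewrite /Rsum; apply: (big_ind2 (fun x y => x <= y)) => //; [lra| move=> *; lra]. Qed.

Lemma Rsum_plus (I : finType) (f g : I -> R) : Rsum (fun i => f i + g i) = Rsum f + Rsum g.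
Proof. by rewrite /Rsum big_split. Qed.

Lemma Rsum_scal (I : finType) (f : I -> R) c : Rsum (fun i => c * f i) = c * Rsum f.
Proof. by rewrite /Rsum -big_distrr. Qed.

Lemma Rsum_ext (I : finType) (f g : I -> R) : (forall i, f i = g i) -> Rsum f = Rsum g.
Proof. by move=> H; rewrite /Rsum; apply: eq_bigr. Qed.

Lemma Rsum_D1 (I : finType) (f : I -> R) i :
  Rsum f = f i + \big[Rplus/R0]_(j | j != i) f j.
Proof. by rewrite /Rsum (bigD1 i). Qed.

Lemma Rsum_term (I : finType) (f : I -> R) i : (forall j, 0 <= f j) -> f i <= Rsum f.
Proof.
move=> H; rewrite (Rsum_D1 f i).
have : 0 <= \big[Rplus/R0]_(j | j != i) f j.
  by apply: (big_ind (fun x => 0 <= x)) => //; [lra| move=> *; lra].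
lra.
Qed.

Lemma Rsum_eq0 (I : finType) (f : I -> R) i : (forall j, 0 <= f j) -> Rsum f = 0 -> f i = 0.
Proof. move=> H H0; have := Rsum_term i H; have := H i; lra. Qed.

Lemma Rsum_const (I : finType) c : Rsum (fun _ : I => c) = INR #|I| * c.
Proof.
rewrite /Rsum big_const; elim: #|I| => [|k IH]; first by rewrite /=; ring.
rewrite iterS IH S_INR; ring.
Qed.

Lemma Rsum_big_pos (I : finType) (f : I -> R) :
  (forall i, 0 <= f i) -> Rsum f = 1 -> exists i, / INR #|I| <= f i.
Proof.
move=> H0 H1; apply: NNPP => Hn.
have Hlt : forall i, f i < / INR #|I|.
  by move=> i; apply: Rnot_le_lt => Hi; apply: Hn; exists i.
have [i _] : exists i : I, True.
  case: (pickP (fun _ : I => true)) => [i _|Hp]; first by exists i.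
  exfalso; have : Rsum f = 0 by rewrite /Rsum big_pred0.
  lra.
have Hc : (0 < #|I|)%N by apply/card_gt0P; exists i.
have HI : 0 < INR #|I| by apply: lt_0_INR; apply/ltP.
have : Rsum f < Rsum (fun _ : I => / INR #|I|).
  rewrite (Rsum_D1 f i) (Rsum_D1 (fun _ => / INR #|I|) i).
  apply: Rplus_lt_le_compat; first by apply: Hlt.
  apply: (big_ind2 (fun x y => x <= y)) => //; [lra| move=> *; lra| move=> j _; apply: Rlt_le; apply: Hlt].
rewrite Rsum_const Rinv_r; lra.
Qed.

Definition ucont (g : R -> R) (a : R) :=
  forall eps, 0 < eps -> exists2 d, 0 < d & forall a', Rabs (a' - a) < d -> Rabs (g a' - g a) < eps.
Definition jcont (g : R -> R -> R) (a b : R) :=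
  forall eps, 0 < eps -> exists2 d, 0 < d & forall a' b', Rabs (a' - a) < d -> Rabs (b' - b) < d ->
     Rabs (g a' b' - g a b) < eps.

Lemma ucont_of_cpt g a : continuity_pt g a -> ucont g a.
Proof.
move=> H eps He; case: (H eps He) => d [Hd Hx]; exists d => // a' Ha'.
case: (Req_dec a' a) => [->|Hne]; first by rewrite Rminus_diag Rabs_R0.
have := Hx a'; rewrite /R_dist /D_x /no_cond; apply; split => //; split => //; exact: nesym.
Qed.

Lemma jcont_plus a b : jcont Rplus a b.
Proof.
move=> eps He; exists (eps/2); first lra.
move=> a' b' H1 H2; have -> : a' + b' - (a + b) = (a' - a) + (b' - b) by ring.
apply: Rle_lt_trans; first exact: Rabs_triang. lra.
Qed.

Lemma jcont_minus a b : jcont Rminus a b.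
Proof.
move=> eps He; exists (eps/2); first lra.
move=> a' b' H1 H2; have -> : a' - b' - (a - b) = (a' - a) + - (b' - b) by ring.
apply: Rle_lt_trans; first exact: Rabs_triang. rewrite Rabs_Ropp; lra.
Qed.

Lemma jcont_mult a b : jcont Rmult a b.
Proof.
move=> eps He.
have HA := Rabs_pos a; have HB := Rabs_pos b.
set K := Rabs a + Rabs b + 1.
have HK : 0 < K by rewrite /K; lra.
exists (Rmin 1 (eps / (2 * K))).
  apply: Rmin_pos; first lra. apply: Rdiv_lt_0_compat; lra.
move=> a' b' H1 H2.
have Hm1 := Rmin_l 1 (eps / (2 * K)); have Hm2 := Rmin_r 1 (eps / (2 * K)).
have -> : a' * b' - a * b = (a' - a) * b' + a * (b' - b) by ring.
apply: Rle_lt_trans; first exact: Rabs_triang.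
rewrite !Rabs_mult.
have Hb' : Rabs b' <= Rabs b + 1.
  have -> : b' = b + (b' - b) by ring.
  apply: Rle_trans; first exact: Rabs_triang. lra.
set d := Rmin 1 (eps / (2 * K)) in H1 H2 Hm1 Hm2.
have E1 : Rabs (a' - a) * Rabs b' <= d * (Rabs b + 1).
  apply: Rmult_le_compat; try apply: Rabs_pos; lra.
have E2 : Rabs a * Rabs (b' - b) <= Rabs a * d.
  apply: Rmult_le_compat_l; lra.
have E3 : d * K <= eps / 2.
  apply: Rle_trans; first (apply: Rmult_le_compat_r; [lra| exact Hm2]).
  rewrite /Rdiv Rinv_mult; field_simplify; lra.
rewrite /K in E3; nra.
Qed.

Lemma jcont_max a b : jcont Rmax a b.
Proof.
move=> eps He; exists eps => // a' b' H1 H2.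
move: H1 H2; rewrite /Rmax; do 2 case: Rle_dec; move=> *; split_Rabs; lra.
Qed.

Lemma ucont_abs a : ucont Rabs a.
Proof. by apply: ucont_of_cpt; apply: Rcontinuity_abs. Qed.

Lemma ucont_inv a : a <> 0 -> ucont Rinv a.
Proof.
move=> Ha.
have H := continuity_pt_inv (fun x => x) a (derivable_continuous_pt _ _ (derivable_pt_id a)) Ha.
move=> eps He; case: (ucont_of_cpt H He) => d Hd K; exists d => // a' Hb; exact: (K a' Hb).
Qed.

Lemma ucont_sqrt a : 0 <= a -> ucont sqrt a.
Proof. by move=> Ha; apply: ucont_of_cpt; apply: continuity_pt_sqrt. Qed.

Section Ctn.
Variable X : Type.
Variable cl : X -> X -> R -> Prop.
Hypothesis clmono : forall x y d d', 0 < d -> d <= d' -> cl x y d -> cl x y d'.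
Variable D : X -> Prop.
Variable x0 : X.

Definition ctn (h : X -> R) :=
  forall eps, 0 < eps -> exists2 d, 0 < d & forall y, D y -> cl x0 y d -> Rabs (h y - h x0) < eps.

Lemma ctn_const c : ctn (fun _ => c).
Proof. move=> eps He; exists 1; first lra. move=> y _ _; rewrite Rminus_diag Rabs_R0; lra. Qed.

Lemma ctn_ext h1 h2 : (forall y, h1 y = h2 y) -> ctn h1 -> ctn h2.
Proof.
move=> E H eps He; case: (H eps He) => d Hd K; exists d => // y Dy Cy; rewrite -!E; exact: K.
Qed.

Lemma ctn_un g h : ucont g (h x0) -> ctn h -> ctn (fun y => g (h y)).
Proof.
move=> Hg Hh eps He; case: (Hg eps He) => d1 Hd1 H1; case: (Hh d1 Hd1) => d2 Hd2 H2.
by exists d2 => // y Dy Cy; apply: H1; apply: H2.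
Qed.

Lemma ctn_bin g h1 h2 : jcont g (h1 x0) (h2 x0) -> ctn h1 -> ctn h2 -> ctn (fun y => g (h1 y) (h2 y)).
Proof.
move=> Hg H1 H2 eps He; case: (Hg eps He) => d Hd Hgd.
case: (H1 d Hd) => d1 Hd1 K1; case: (H2 d Hd) => d2 Hd2 K2.
exists (Rmin d1 d2); first exact: Rmin_pos.
move=> y Dy Cy; apply: Hgd.
  by apply: K1 => //; apply: (clmono (d := Rmin d1 d2)) => //; [exact: Rmin_pos| exact: Rmin_l].
by apply: K2 => //; apply: (clmono (d := Rmin d1 d2)) => //; [exact: Rmin_pos| exact: Rmin_r].
Qed.

Lemma ctn_plus h1 h2 : ctn h1 -> ctn h2 -> ctn (fun y => h1 y + h2 y).
Proof. by apply: ctn_bin; apply: jcont_plus. Qed.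
Lemma ctn_minus h1 h2 : ctn h1 -> ctn h2 -> ctn (fun y => h1 y - h2 y).
Proof. by apply: ctn_bin; apply: jcont_minus. Qed.
Lemma ctn_mult h1 h2 : ctn h1 -> ctn h2 -> ctn (fun y => h1 y * h2 y).
Proof. by apply: ctn_bin; apply: jcont_mult. Qed.
Lemma ctn_max h1 h2 : ctn h1 -> ctn h2 -> ctn (fun y => Rmax (h1 y) (h2 y)).
Proof. by apply: ctn_bin; apply: jcont_max. Qed.
Lemma ctn_abs h : ctn h -> ctn (fun y => Rabs (h y)).
Proof. by apply: ctn_un; apply: ucont_abs. Qed.
Lemma ctn_inv h : h x0 <> 0 -> ctn h -> ctn (fun y => / h y).
Proof. by move=> Hn; apply: ctn_un; apply: ucont_inv. Qed.
Lemma ctn_div h1 h2 : h2 x0 <> 0 -> ctn h1 -> ctn h2 -> ctn (fun y => h1 y / h2 y).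
Proof. by move=> Hn H1 H2; apply: ctn_mult => //; apply: ctn_inv. Qed.
Lemma ctn_sqrt h : 0 <= h x0 -> ctn h -> ctn (fun y => sqrt (h y)).
Proof. by move=> Hn; apply: ctn_un; apply: ucont_sqrt. Qed.

Lemma ctn_bigop (I : Type) (op : R -> R -> R) idx (Hop : forall a b, jcont op a b)
  (r : seq I) (F : I -> X -> R) :
  (forall i, ctn (F i)) -> ctn (fun y => \big[op/idx]_(i <- r) F i y).
Proof.
move=> HF; elim: r => [|i r IH].
  by apply: (ctn_ext (h1 := fun _ => idx)); [move=> y; rewrite big_nil| apply: ctn_const].
apply: (ctn_ext (h1 := fun y => op (F i y) (\big[op/idx]_(j <- r) F j y))).
  by move=> y; rewrite big_cons.
by apply: ctn_bin.
Qed.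

Lemma ctn_Rsum (I : finType) (F : I -> X -> R) :
  (forall i, ctn (F i)) -> ctn (fun y => Rsum (fun i => F i y)).
Proof. move=> H; exact: (@ctn_bigop I Rplus R0 (fun a b => jcont_plus a b) (index_enum I) F H). Qed.

Lemma ctn_Rprod (I : finType) (F : I -> X -> R) :
  (forall i, ctn (F i)) -> ctn (fun y => \big[Rmult/R1]_(i : I) F i y).
Proof. move=> H; exact: (@ctn_bigop I Rmult R1 (fun a b => jcont_mult a b) (index_enum I) F H). Qed.

End Ctn.

Definition nzb (r : R) : bool := if Req_EM_T r 0 then false else true.
Lemma nzbP r : reflect (r <> 0) (nzb r).
Proof. rewrite /nzb; case: Req_EM_T => H; constructor => //; tauto. Qed.
Definition ltb (r1 r2 : R) : bool := if Rlt_dec r1 r2 then true else false.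
Lemma ltbP r1 r2 : reflect (r1 < r2) (ltb r1 r2).
Proof. rewrite /ltb; case: Rlt_dec => H; by constructor. Qed.

Section Comb.
Variable n : nat.
Variable S : {set edges n}.
Hypothesis HS : S != set0.
Hypothesis HG : forall G, G \in S -> is_graph G.

Notation V := (vertex n).
Definition Kc := unint_complex (closed_above_allowed S).
Definition supp (a : V -> R) : {set V} := [set v | nzb (a v)].
Definition Pis (P : {set 'I_n}) : {set V} := [set ((p, setT) : V) | p in P].

Lemma in_supp a v : (v \in supp a) = nzb (a v).
Proof. by rewrite inE. Qed.

Lemma good_sub (T T' : {set V}) : T' \subset T -> Kc T -> Kc T'.
Proof. move=> sub [H HH HT]; exists H => //; exact: subset_trans HT. Qed.

Lemma one_per_color (T : {set V}) v w : Kc T -> v \in T -> w \in T -> v.1 = w.1 -> v = w.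
Proof.
move=> [H _ HT] vT wT E.
move/subsetP: HT => HT.
case/imsetP: (HT v vT) => p _ Ev; case/imsetP: (HT w wT) => q _ Ew.
rewrite Ev Ew in E *; by move: E => /= ->.
Qed.

Lemma good_addPi (T : {set V}) (P : {set 'I_n}) :
  Kc T -> (forall v, v \in T -> v.1 \notin P) -> Kc (T :|: Pis P).
Proof.
move=> [H [Hgr [G GS GH]] HT] HP.
exists (H :|: [set e | e.2 \in P]).
  split; first by move=> p; rewrite inE Hgr.
  exists G => //; apply: subset_trans GH _; exact: subsetUl.
apply/subsetP => v; rewrite inE => /orP [vT|].
  move/subsetP: HT => HT; have := HT v vT; move=> /imsetP [p _ Ev].
  apply/imsetP; exists p => //; rewrite Ev; congr pair.
  have Hp : p \notin P by have := HP v vT; rewrite Ev.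
  apply/setP => q; rewrite !inE /=; by rewrite (negbTE Hp) orbF.
move=> /imsetP [p pP ->]; apply/imsetP; exists p => //; congr pair.
apply/setP => q; by rewrite !inE /= pP orbT.
Qed.

Lemma good_full : Kc (Pis setT).
Proof.
case/set0Pn: HS => G GS.
exists setT.
  split; first by move=> p; rewrite inE.
  by exists G => //; apply: subsetT.
apply/subsetP => v /imsetP [p _ ->]; apply/imsetP; exists p => //; congr pair.
by apply/setP => q; rewrite !inE.
Qed.

Lemma realP a : realization Kc a <-> ((forall v, 0 <= a v) /\ Rsum a = 1 /\ Kc (supp a)).
Proof.
split.
  move=> [H0 [H1 [s Ks Hs]]]; split => //; split => //.
  apply: (good_sub (T := s)) => //; apply/subsetP => v; rewrite in_supp => /nzbP; exact: Hs.
move=> [H0 [H1 H2]]; split => //; split => //; exists (supp a) => // v Hv.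
by rewrite in_supp; apply/nzbP.
Qed.

Definition tcol (a : V -> R) (p : 'I_n) := Rsum (fun w : {set 'I_n} => a (p, w)).

Lemma tcol_cases a p : realization Kc a ->
  (exists w, a (p, w) <> 0 /\ tcol a p = a (p, w) /\ forall w', w' != w -> a (p, w') = 0)
  \/ (tcol a p = 0 /\ forall w, a (p, w) = 0).
Proof.
move=> /realP [H0 [H1 H2]].
case: (classic (exists w, a (p, w) <> 0)) => [[w Hw]|Hn].
  left; exists w.
  have Hz : forall w', w' != w -> a (p, w') = 0.
    move=> w' Hne; apply: NNPP => Hnz.
    have E := one_per_color (v := (p, w')) (w := (p, w)) H2.
    have : ((p, w') : V) = (p, w).
      by apply: E => //; rewrite in_supp; apply/nzbP.
    by case=> Ew; move: Hne; rewrite Ew eqxx.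
  split => //; split => //.
  rewrite /tcol (Rsum_D1 _ w) big1; first by rewrite Rplus_0_r.
  by move=> w' Hne; apply: Hz.
right.
have Hz : forall w, a (p, w) = 0 by move=> w; apply: NNPP => Hw; apply: Hn; exists w.
split => //; rewrite /tcol /Rsum big1 //.
Qed.

Lemma tcol_ge0 a p : (forall v, 0 <= a v) -> 0 <= tcol a p.
Proof. by move=> H; apply: Rsum_ge0. Qed.

Lemma Rsum_pair (F : V -> R) : Rsum F = Rsum (fun p : 'I_n => Rsum (fun w : {set 'I_n} => F (p, w))).
Proof. rewrite /Rsum pair_bigA /=. by apply: eq_bigr => [[p w]]. Qed.

Lemma Rsum_tcol a : Rsum a = Rsum (fun p => tcol a p).
Proof. exact: Rsum_pair. Qed.

End Comb.

Section Stages.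
Variable n : nat.
Variable S : {set edges n}.
Hypothesis HS : S != set0.
Hypothesis HG : forall G, G \in S -> is_graph G.
Notation V := (vertex n).
Notation Kc := (Kc S).

Definition thr (s : R) (a : V -> R) (v : V) : R :=
  Rmax 0 (a v - s) + (if v.2 == setT then Rmax 0 (s - tcol a v.1) else 0).
Definition Tn (s : R) (a : V -> R) (v : V) : R := thr s a v / Rsum (thr s a).

Lemma Rmax0_ge a : 0 <= Rmax 0 a. Proof. exact: Rmax_l. Qed.
Lemma Rmax0_ge' a : a <= Rmax 0 a. Proof. exact: Rmax_r. Qed.

Lemma thr_ge0 s a v : 0 <= thr s a v.
Proof. rewrite /thr; have := Rmax0_ge (a v - s); case: (v.2 == setT); have := Rmax0_ge (s - tcol a v.1); lra. Qed.

Lemma card_V_ord : #|'I_n| = n. Proof. exact: card_ord. Qed.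

Lemma thr_sum_lb s a : realization Kc a -> 0 <= s -> INR n * s <= / 2 -> / 2 <= Rsum (thr s a).
Proof.
move=> Ha Hs Hn.
have Ha' := Ha; move/realP: Ha' => [H0 [H1 H2]].
have Hp : forall p, tcol a p - s <= Rsum (fun w : {set 'I_n} => thr s a (p, w)).
  move=> p; case: (tcol_cases p Ha) => [[w [Hw [Ht _]]]|[Ht _]].
    apply: Rle_trans; last first.
      apply: (Rsum_term (f := fun w => thr s a (p, w)) w) => w'; exact: thr_ge0.
    rewrite /thr /= Ht; have := Rmax0_ge' (a (p, w) - s).
    case: ifP => _; have := Rmax0_ge (s - a (p, w)); move=> h1 h2; set xx := a (p, w) in h1 h2 *; lra.
  rewrite Ht; have := Rsum_ge0 (f := fun w : {set 'I_n} => thr s a (p, w)) (fun w => thr_ge0 s a (p, w)); lra.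
rewrite Rsum_pair.
apply: Rle_trans; last by apply: Rsum_le; exact: Hp.
rewrite (Rsum_ext (g := fun p => tcol a p + (- s))) ?Rsum_plus; last by move=> p; ring.
by rewrite -Rsum_tcol H1 Rsum_const card_ord; lra.
Qed.

Lemma Tn_real s a : realization Kc a -> 0 <= s -> INR n * s <= / 2 -> realization Kc (Tn s a).
Proof.
move=> Ha Hs Hn.
have Hlb := thr_sum_lb Ha Hs Hn.
have Hpos : 0 < Rsum (thr s a) by lra.
have Ha' := Ha; move/realP: Ha' => [H0 [H1 H2]].
apply/realP; split.
  move=> v; rewrite /Tn; apply: Rmult_le_pos; first exact: thr_ge0.
  by apply: Rlt_le; apply: Rinv_0_lt_compat.
split.
  rewrite /Tn (Rsum_ext (g := fun v => / Rsum (thr s a) * thr s a v)); last by move=> v; rewrite /Rdiv Rmult_comm.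
  rewrite Rsum_scal; field; lra.
set T1 := [set v : V | ltb s (a v)].
set P := [set p : 'I_n | ltb (tcol a p) s].
have K1 : Kc T1.
  apply: good_sub H2; apply/subsetP => v; rewrite !inE => /ltbP Hv; apply/nzbP; lra.
have K2 : Kc (T1 :|: Pis P).
  apply: good_addPi => // v; rewrite !inE => /ltbP Hv; apply/negP => /ltbP Ht.
  have : a v <= tcol a v.1.
    case: v Hv Ht => p w /= Hv Ht; apply: (Rsum_term (f := fun w => a (p, w))) => w'; exact: H0.
  lra.
apply: good_sub K2; apply/subsetP => v; rewrite in_supp => /nzbP Hv.
have Hthr : thr s a v <> 0 by move=> E; apply: Hv; rewrite /Tn E /Rdiv Rmult_0_l.
rewrite inE; case: (Rlt_dec s (a v)) => Hsv.
  by apply/orP; left; rewrite inE; apply/ltbP.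
apply/orP; right; move: Hthr; rewrite /thr.
have -> : Rmax 0 (a v - s) = 0 by rewrite Rmax_left //; lra.
rewrite Rplus_0_l; case: v {Hv Hsv} => p w /=; case: eqP => // ->.
case: (Rlt_dec (tcol a p) s) => Ht.
  by move=> _; apply/imsetP; exists p => //; rewrite inE; apply/ltbP.
by rewrite Rmax_left //; lra.
Qed.

Lemma Tn_Pi s a q : realization Kc a -> 0 < s -> INR n * s <= / 2 -> (forall w, a (q, w) = 0) -> 0 < Tn s a (q, setT).
Proof.
move=> Ha Hs Hn Hq.
have Hlb := thr_sum_lb Ha (Rlt_le _ _ Hs) Hn.
rewrite /Tn /thr /= eqxx Hq.
have -> : tcol a q = 0 by rewrite /tcol /Rsum big1.
rewrite Rmax_left; last lra. rewrite Rmax_right; last lra.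
apply: Rdiv_lt_0_compat; first lra. apply: (Rlt_le_trans _ (/2)); [lra| exact Hlb].
Qed.

Definition dcoef (s : R) (v : V) : R := if v.2 == setT then 1 else 1 - s.
Definition drain (s : R) (a : V -> R) (v : V) : R :=
  dcoef s v * a v / Rsum (fun u => dcoef s u * a u).

Lemma drain_den s a q : (forall v, 0 <= a v) -> 0 < a (q, setT) -> s <= 1 ->
  a (q, setT) <= Rsum (fun u => dcoef s u * a u).
Proof.
move=> H0 Hq Hs.
have -> : a (q, setT) = dcoef s (q, setT) * a (q, setT) by rewrite /dcoef /= eqxx; ring.
apply: (Rsum_term (f := fun u => dcoef s u * a u)) => u.
apply: Rmult_le_pos => //; rewrite /dcoef; case: (u.2 == setT); lra.
Qed.

Lemma drain_real s a q : realization Kc a -> 0 < a (q, setT) -> 0 <= s <= 1 -> realization Kc (drain s a).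
Proof.
move=> Ha Hq Hs; have Ha' := Ha; move/realP: Ha' => [H0 [H1 H2]].
have Hd := drain_den H0 Hq (proj2 Hs).
apply/realP; split.
  move=> v; rewrite /drain; apply: Rmult_le_pos; last by apply: Rlt_le; apply: Rinv_0_lt_compat; lra.
  apply: Rmult_le_pos => //; rewrite /dcoef; case: (v.2 == setT); lra.
split.
  rewrite /drain (Rsum_ext (g := fun v => / Rsum (fun u => dcoef s u * a u) * (dcoef s v * a v))); last by move=> v; rewrite /Rdiv Rmult_comm.
  rewrite Rsum_scal; field; lra.
apply: good_sub H2; apply/subsetP => v; rewrite !in_supp => /nzbP Hv; apply/nzbP => E; apply: Hv.
by rewrite /drain E Rmult_0_r /Rdiv Rmult_0_l.
Qed.

Lemma drain1_supp a : supp (drain 1 a) \subset Pis setT.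
Proof.
apply/subsetP => [[p w]]; rewrite in_supp => /nzbP; rewrite /drain /dcoef /=.
case: eqP => [->|_]; first by move=> _; apply/imsetP; exists p.
rewrite Rminus_diag => H; exfalso; apply: H; by rewrite /Rdiv !Rmult_0_l.
Qed.

Definition bary (v : V) : R := if v.2 == setT then / INR n else 0.
Definition lin (s : R) (a b : V -> R) (v : V) : R := (1 - s) * a v + s * b v.

Lemma bary_sum : (0 < n)%N -> Rsum bary = 1.
Proof.
move=> Hn; rewrite Rsum_pair.
rewrite (Rsum_ext (g := fun _ => / INR n)); first by rewrite Rsum_const card_ord; field; apply: not_0_INR => E; move: Hn; rewrite E.
move=> p; rewrite /Rsum (bigD1 setT) //= /bary /= eqxx big1; first by rewrite Rplus_0_r.
by move=> w /negbTE ->.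
Qed.

Lemma lin_real s a : (0 < n)%N -> realization Kc a -> supp a \subset Pis setT -> 0 <= s <= 1 ->
  realization Kc (lin s a bary).
Proof.
move=> Hn Ha Hsub Hs; have Ha' := Ha; move/realP: Ha' => [H0 [H1 H2]].
have HnR : 0 < INR n by apply: lt_0_INR; apply/ltP.
have Hb0 : forall v, 0 <= bary v.
  by move=> v; rewrite /bary; case: (v.2 == setT); [apply: Rlt_le; apply: Rinv_0_lt_compat|]; lra.
apply/realP; split.
  move=> v; rewrite /lin; apply: Rplus_le_le_0_compat; apply: Rmult_le_pos; try lra; auto.
split.
  rewrite /lin Rsum_plus !Rsum_scal H1 bary_sum //; ring.
apply: good_sub (good_full HS); apply/subsetP => v; rewrite in_supp => /nzbP Hv.
case: (Req_dec (a v) 0) => Hav.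
  move: Hv; rewrite /lin /bary Hav; case: v {Hav} => p w /=; case: eqP => [->|_].
    by move=> _; apply/imsetP; exists p.
  by rewrite !Rmult_0_r Rplus_0_r.
by move/subsetP: Hsub; apply; rewrite in_supp; apply/nzbP.
Qed.

End Stages.

Lemma fin_min (I : finType) (P : I -> R -> Prop) :
  (forall i d d', 0 < d' -> d' <= d -> P i d -> P i d') ->
  (forall i, exists2 d, 0 < d & P i d) -> exists2 d, 0 < d & forall i, P i d.
Proof.
move=> Hm Hex.
suff : forall r : seq I, exists2 d, 0 < d & forall i, i \in r -> P i d.
  case/(_ (enum I)) => d Hd Hr; exists d => // i; apply: Hr; by rewrite mem_enum.
elim => [|j r [d Hd Hr]]; first by exists 1; [lra| move=> i].
case: (Hex j) => dj Hdj Pj.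
exists (Rmin d dj); first exact: Rmin_pos.
move=> i; rewrite inE => /orP [/eqP ->|ir].
  apply: (Hm j dj) => //; [exact: Rmin_pos| exact: Rmin_r].
apply: (Hm i d) => //; [exact: Rmin_pos| exact: Rmin_l| exact: Hr].
Qed.

Section Hom.
Variable m : nat.
Notation E := ('I_m.+1 -> R).

Definition clS (x y : E) (d : R) := forall i, Rabs (y i - x i) < d.
Definition clH (p q : E * R) (d : R) := (forall i, Rabs (q.1 i - p.1 i) < d) /\ Rabs (q.2 - p.2) < d.
Definition DH (p : E * R) := @sphere m p.1 /\ 0 <= p.2 <= 1.

Lemma clS_mono x y d d' : 0 < d -> d <= d' -> clS x y d -> clS x y d'.
Proof. move=> _ H H1 i; have := H1 i; lra. Qed.
Lemma clH_mono x y d d' : 0 < d -> d <= d' -> clH x y d -> clH x y d'.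
Proof. move=> _ H [H1 H2]; split; [move=> i; have := H1 i|]; lra. Qed.

Lemma coord_le_euclid (x y : E) i : Rabs (x i - y i) <= euclid_dist x y.
Proof.
rewrite /euclid_dist -sqrt_Rsqr_abs; apply: sqrt_le_1_alt.
have -> : Rsqr (x i - y i) = (fun j => (x j - y j) ^ 2) i by rewrite /Rsqr /=; ring.
apply: Rsum_term => j; apply: pow2_ge_0.
Qed.

Lemma euclid_le_sum (x y : E) : euclid_dist x y <= Rsum (fun i => Rabs (x i - y i)).
Proof.
have Hs : 0 <= Rsum (fun i => Rabs (x i - y i)) by apply: Rsum_ge0 => i; apply: Rabs_pos.
rewrite /euclid_dist -(sqrt_Rsqr _ Hs); apply: sqrt_le_1_alt.
rewrite /Rsqr -Rsum_scal; apply: Rsum_le => i.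
have -> : (x i - y i) ^ 2 = Rabs (x i - y i) * Rabs (x i - y i).
  by rewrite -Rabs_mult Rabs_right; [ring| apply: Rle_ge; apply: Rle_0_sqr].
apply: Rmult_le_compat_r; first exact: Rabs_pos.
apply: (Rsum_term (f := fun i => Rabs (x i - y i))) => j; apply: Rabs_pos.
Qed.

Lemma clS_euclid (x y : E) d : 0 < d -> clS x y (d / (2 * INR m.+1)) -> euclid_dist x y < d.
Proof.
move=> Hd Hc.
have Hm : 0 < INR m.+1 by apply: lt_0_INR; lia.
apply: Rle_lt_trans; first exact: euclid_le_sum.
apply: (Rle_lt_trans _ (Rsum (fun _ : 'I_m.+1 => d / (2 * INR m.+1)))).
  apply: Rsum_le => i; rewrite Rabs_minus_sym; apply: Rlt_le; exact: Hc.
rewrite Rsum_const card_ord; field_simplify; lra.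
Qed.

Lemma ctn_of_cont (V : finType) (D : E -> Prop) (f : E -> V -> R) x :
  continuous_on D f -> D x -> forall v, ctn clS D x (fun y => f y v).
Proof.
move=> Hf Dx v eps He; case: (Hf x Dx eps He) => d Hd K.
have Hm : 0 < INR m.+1 by apply: lt_0_INR; lia.
exists (d / (2 * INR m.+1)); first by apply: Rdiv_lt_0_compat; lra.
move=> y Dy Cy; apply: K => //; exact: clS_euclid.
Qed.

Lemma ctn_coord (D : E -> Prop) x i : ctn clS D x (fun y => y i).
Proof. move=> eps He; exists eps => // y _ Cy; exact: Cy. Qed.

Lemma ctn_liftH (h : E -> R) x s : 0 <= s <= 1 -> ctn clS (@sphere m) x h -> ctn clH DH (x, s) (fun p => h p.1).
Proof.
move=> Hs Hh eps He; case: (Hh eps He) => d Hd K; exists d => // [[y s']] [Dy _] [Cy _]; exact: K.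
Qed.

Lemma ctn_sndH x s : ctn clH DH (x, s) (fun p => p.2).
Proof. move=> eps He; exists eps => // [[y s']] _ [_ Cs] /=; exact: Cs. Qed.

Variable V : finType.
Variable K : {set V} -> Prop.

Definition HomOK (H : E -> R -> V -> R) :=
  (forall x s, DH (x, s) -> forall v, ctn clH DH (x, s) (fun p => H p.1 p.2 v)) /\
  (forall x s, DH (x, s) -> realization K (H x s)).

Definition concat (H1 H2 : E -> R -> V -> R) (x : E) (s : R) : V -> R :=
  if Rle_dec s (/2) then H1 x (2 * s) else H2 x (2 * s - 1).

Lemma concat_ok H1 H2 : HomOK H1 -> HomOK H2 -> (forall x, sphere x -> H1 x 1 = H2 x 0) ->
  HomOK (concat H1 H2).
Proof.
move=> [C1 R1] [C2 R2] E12; split; last first.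
  move=> x s [Sx /= Hs]; rewrite /concat; case: Rle_dec => Hs2.
    by apply: R1; split => //=; split; lra.
  by apply: R2; split => //=; split; lra.
move=> x s [Sx /= Hs] v eps He.
have Hc1 := fun s0 (Hs0 : 0 <= s0 <= 1) => C1 x s0 (conj Sx Hs0) v eps He.
have Hc2 := fun s0 (Hs0 : 0 <= s0 <= 1) => C2 x s0 (conj Sx Hs0) v eps He.
rewrite /concat /=.
case: (Rlt_le_dec s (/2)) => Hlt.
  have [d1 Hd1 K1] := Hc1 (2 * s) ltac:(lra).
  exists (Rmin (d1 / 2) (/2 - s)); first by apply: Rmin_pos; lra.
  move=> [y s'] [Dy /= Hs'] [/= Cy Cs] /=.
  have Hm1 := Rmin_l (d1 / 2) (/2 - s); have Hm2 := Rmin_r (d1 / 2) (/2 - s).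
  have Hs'2 : s' < /2 by move: Cs; split_Rabs; lra.
  destruct (Rle_dec s' (/2)) as [Hq1|Hq1]; [|lra]; destruct (Rle_dec s (/2)) as [Hq2|Hq2]; [|lra].
  apply: (K1 (y, 2 * s')); first by split => //=; split; lra.
  split => /=; first by move=> i; have := Cy i; lra.
  have -> : 2 * s' - 2 * s = 2 * (s' - s) by ring.
  rewrite Rabs_mult Rabs_right; lra.
case: (Rle_lt_or_eq_dec _ _ Hlt) => {}Hlt.
  have [d2 Hd2 K2] := Hc2 (2 * s - 1) ltac:(lra).
  exists (Rmin (d2 / 2) (s - /2)); first by apply: Rmin_pos; lra.
  move=> [y s'] [Dy /= Hs'] [/= Cy Cs] /=.
  have Hm1 := Rmin_l (d2 / 2) (s - /2); have Hm2 := Rmin_r (d2 / 2) (s - /2).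
  have Hs'2 : /2 < s' by move: Cs; split_Rabs; lra.
  destruct (Rle_dec s' (/2)) as [Hq1|Hq1]; [lra|]; destruct (Rle_dec s (/2)) as [Hq2|Hq2]; [lra|].
  apply: (K2 (y, 2 * s' - 1)); first by split => //=; split; lra.
  split => /=; first by move=> i; have := Cy i; lra.
  have -> : 2 * s' - 1 - (2 * s - 1) = 2 * (s' - s) by ring.
  rewrite Rabs_mult Rabs_right; lra.
subst s.
have [d1 Hd1 K1] := Hc1 1 ltac:(lra).
have [d2 Hd2 K2] := Hc2 0 ltac:(lra).
exists (Rmin (d1 / 2) (d2 / 2)); first by apply: Rmin_pos; lra.
move=> [y s'] [Dy /= Hs'] [/= Cy Cs] /=.
have Hm1 := Rmin_l (d1 / 2) (d2 / 2); have Hm2 := Rmin_r (d1 / 2) (d2 / 2).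
destruct (Rle_dec (/2) (/2)) as [Hq2|Hq2]; [|lra].
have -> : 2 * / 2 = 1 by field.
destruct (Rle_dec s' (/2)) as [Hs'2|Hs'2].
  apply: (K1 (y, 2 * s')); first by split => //=; split; lra.
  split => /=; first by move=> i; have := Cy i; lra.
  have -> : 2 * s' - 1 = 2 * (s' - /2) by field.
  rewrite Rabs_mult (Rabs_right 2); lra.
rewrite E12 //.
apply: (K2 (y, 2 * s' - 1)); first by split => //=; split; lra.
split => /=; first by move=> i; have := Cy i; lra.
have -> : 2 * s' - 1 - 0 = 2 * (s' - /2) by field.
rewrite Rabs_mult (Rabs_right 2); lra.
Qed.

End Hom.

Section Ext.
Variable m : nat.
Notation E := ('I_m.+1 -> R).

Definition nm (y : E) := sqrt (Rsum (fun i => y i ^ 2)).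
Definition sc (y : E) : E := fun i => y i / nm y.

Lemma Rsum_sq_ge0 (y : E) : 0 <= Rsum (fun i => y i ^ 2).
Proof. apply: Rsum_ge0 => i; apply: pow2_ge_0. Qed.

Lemma sphere_sc y : 0 < nm y -> sphere (sc y).
Proof.
move=> Hn; rewrite /sphere /sc.
rewrite (Rsum_ext (g := fun i => / (nm y ^ 2) * y i ^ 2)); last by move=> i; field; lra.
rewrite Rsum_scal /nm /= Rmult_1_r sqrt_sqrt; last exact: Rsum_sq_ge0.
apply: Rinv_l => E0; move: Hn; rewrite /nm E0 sqrt_0; lra.
Qed.

Lemma nm_sphere y : sphere y -> nm y = 1.
Proof. by rewrite /sphere /nm => ->; rewrite sqrt_1. Qed.

Lemma nm_disk y : disk y -> nm y <= 1.
Proof. rewrite /disk /nm => H; rewrite -sqrt_1; exact: sqrt_le_1_alt. Qed.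

Lemma sc_sphere y : sphere y -> sc y = y.
Proof. move=> Hs; apply: functional_extensionality => i; rewrite /sc nm_sphere //; field. Qed.

Lemma ctn_nm (D : E -> Prop) y0 : ctn (@clS m) D y0 nm.
Proof.
apply: ctn_sqrt; first exact: Rsum_sq_ge0.
apply: ctn_Rsum; first exact: (@clS_mono m).
move=> i; apply: (ctn_ext (h1 := fun y => y i * y i)); first by move=> y; ring.
by apply: ctn_mult; [exact: (@clS_mono m)| apply: ctn_coord| apply: ctn_coord].
Qed.

Lemma ctn_sc (D : E -> Prop) y0 i : 0 < nm y0 -> ctn (@clS m) D y0 (fun y => sc y i).
Proof.
move=> Hn; apply: ctn_div; first exact: (@clS_mono m). lra.
  exact: ctn_coord.
exact: ctn_nm.
Qed.

Lemma compH (Y : Type) (clY : Y -> Y -> R -> Prop) (DY : Y -> Prop) y0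
  (clYm : forall x y d d', 0 < d -> d <= d' -> clY x y d -> clY x y d')
  (phi1 : Y -> E) (phi2 : Y -> R) (h : E * R -> R) :
  (forall i, ctn clY DY y0 (fun y => phi1 y i)) -> ctn clY DY y0 phi2 ->
  ctn (@clH m) (@DH m) (phi1 y0, phi2 y0) h ->
  forall eps, 0 < eps -> exists2 d, 0 < d & forall y, DY y -> clY y0 y d -> DH (phi1 y, phi2 y) ->
    Rabs (h (phi1 y, phi2 y) - h (phi1 y0, phi2 y0)) < eps.
Proof.
move=> H1 H2 Hh eps He; case: (Hh eps He) => d Hd K.
have [d1 Hd1 K1] : exists2 d1, 0 < d1 & forall i y, DY y -> clY y0 y d1 -> Rabs (phi1 y i - phi1 y0 i) < d.
  apply: (fin_min (P := fun i d1 => forall y, DY y -> clY y0 y d1 -> Rabs (phi1 y i - phi1 y0 i) < d)).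
    move=> i e e' He' Hle Hp y Dy Cy; apply: Hp => //; exact: (clYm _ _ e') .
  move=> i; exact: (H1 i d Hd).
case: (H2 d Hd) => d2 Hd2 K2.
exists (Rmin d1 d2); first exact: Rmin_pos.
move=> y Dy Cy Dp; apply: K => //; split => /=.
  move=> i; apply: K1 => //; apply: (clYm _ _ (Rmin d1 d2)) => //; [exact: Rmin_pos| exact: Rmin_l].
apply: K2 => //; apply: (clYm _ _ (Rmin d1 d2)) => //; [exact: Rmin_pos| exact: Rmin_r].
Qed.

Variable V : finType.
Variable K : {set V} -> Prop.

Definition gext (H : E -> R -> V -> R) (c : V -> R) (y : E) : V -> R :=
  if Rle_dec (nm y) (/2) then c else H (sc y) (2 - 2 * nm y).

Lemma extend (f : E -> V -> R) H c : HomOK K H -> (forall x, sphere x -> H x 0 = f x) ->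
  (forall x, sphere x -> H x 1 = c) ->
  exists g : E -> V -> R, continuous_on (@disk m.+1) g /\
    (forall x, disk x -> realization K (g x)) /\ (forall x, sphere x -> g x = f x).
Proof.
move=> [HC HR] H0 H1.
set e0 : E := fun i => if i == ord0 then 1 else 0.
have Se0 : sphere e0.
  rewrite /sphere /Rsum (bigD1 ord0) //= big1 /e0 ?eqxx; first ring.
  by move=> i /negbTE ->; ring.
have Rc : realization K c by rewrite -(H1 e0 Se0); apply: HR; split => //=; lra.
exists (gext H c); split; last split.
-
  move=> y0 Dy0 eps He.
  suff Hv : forall v, exists2 d, 0 < d & forall y, disk y -> (@clS m) y0 y d -> Rabs (gext H c y v - gext H c y0 v) < eps.
    case: (fin_min (P := fun v d => forall y, disk y -> (@clS m) y0 y d -> Rabs (gext H c y v - gext H c y0 v) < eps)) => //.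
      move=> v d d' Hd' Hle Hp y Dy Cy; apply: Hp => //; exact: (@clS_mono m _ _ d' d Hd' Hle Cy).
    move=> d Hd K0; exists d => // y Dy Ed v; apply: K0 => // i.
    have := coord_le_euclid y0 y i; rewrite Rabs_minus_sym; lra.
  move=> v.
  have Hnm := ctn_nm (@disk m.+1) y0.
  set a0 := nm y0 in Hnm.
  have a0ge : 0 <= a0 by apply: sqrt_pos.
  case: (Rlt_le_dec a0 (/2)) => Ha0.
    case: (Hnm (/2 - a0) ltac:(lra)) => d Hd K1; exists d => // y Dy Cy.
    have := K1 y Dy Cy; rewrite /gext -/a0.
    destruct (Rle_dec (nm y) (/2)) as [Hq|Hq]; destruct (Rle_dec a0 (/2)) as [Hq'|Hq']; try lra.
      by move=> _; rewrite Rminus_diag Rabs_R0.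
    move=> HH; exfalso; move: HH; split_Rabs; lra.
  have Hpos : 0 < a0 by lra.
  have Hsc : forall i, ctn (@clS m) (@disk m.+1) y0 (fun y => sc y i) by move=> i; apply: ctn_sc.
  have Hphi2 : ctn (@clS m) (@disk m.+1) y0 (fun y => 2 - 2 * nm y).
    apply: ctn_minus; first exact: (@clS_mono m). exact: ctn_const.
    apply: ctn_mult; [exact: (@clS_mono m)| exact: ctn_const| exact: Hnm].
  have Hd0 : DH (sc y0, 2 - 2 * nm y0).
    split => /=; first exact: sphere_sc. have := nm_disk Dy0; rewrite -/a0; lra.
  have Hh := HC _ _ Hd0 v.
  case: (compH (@clS_mono m) Hsc Hphi2 Hh He) => d1 Hd1 K1.
  case: (Rle_lt_or_eq_dec _ _ Ha0) => Ha1.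
    case: (Hnm (a0 - /2) ltac:(lra)) => d2 Hd2 K2.
    exists (Rmin d1 d2); first exact: Rmin_pos.
    move=> y Dy Cy.
    have Cy1 : (@clS m) y0 y d1 by apply: (@clS_mono m _ _ (Rmin d1 d2) d1 (Rmin_pos _ _ Hd1 Hd2) (Rmin_l d1 d2) Cy).
    have Cy2 : (@clS m) y0 y d2 by apply: (@clS_mono m _ _ (Rmin d1 d2) d2 (Rmin_pos _ _ Hd1 Hd2) (Rmin_r d1 d2) Cy).
    have := K2 y Dy Cy2; rewrite /gext -/a0 => Hn.
    have Hny : /2 < nm y by move: Hn; split_Rabs; lra.
    destruct (Rle_dec (nm y) (/2)) as [Hq|Hq]; destruct (Rle_dec a0 (/2)) as [Hq'|Hq']; try lra.
    apply: (K1 y Dy Cy1); split => /=; first by apply: sphere_sc; lra.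
    have := nm_disk Dy; lra.
  exists d1 => // y Dy Cy.
  rewrite /gext -/a0.
  destruct (Rle_dec a0 (/2)) as [Hq'|Hq']; last lra.
  destruct (Rle_dec (nm y) (/2)) as [Hq|Hq].
    by rewrite Rminus_diag Rabs_R0.
  have HK := K1 y Dy Cy; simpl in HK |- *.
  rewrite -/a0 -Ha1 in HK.
  have E1 : 2 - 2 * / 2 = 1 by field.
  rewrite E1 H1 in HK; last exact: sphere_sc.
  apply: HK; split => /=; first by apply: sphere_sc; lra.
  have := nm_disk Dy; lra.
- move=> y Dy; rewrite /gext.
  destruct (Rle_dec (nm y) (/2)) as [Hq|Hq] => //.
  apply: HR; split => /=; first by apply: sphere_sc; lra.
  have := nm_disk Dy; lra.
- move=> y Sy; rewrite /gext nm_sphere //.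
  destruct (Rle_dec 1 (/2)) as [Hq|Hq]; first lra.
  by rewrite sc_sphere // Rmult_1_r Rminus_diag H0.
Qed.

End Ext.

Unset Implicit Arguments.
Fixpoint toTn (k : nat) (g : nat -> R) : Compactness.Tn k R :=
  match k with 0%nat => tt | S k' => (g 0%nat, toTn k' (fun j => g (S j))) end.
Fixpoint fromTn (k : nat) : Compactness.Tn k R -> nat -> R :=
  match k as k0 return Compactness.Tn k0 R -> nat -> R with
  | 0%nat => fun _ _ => 0
  | S k' => fun (t : R * Compactness.Tn k' R) j => match j with 0%nat => fst t | S j' => fromTn k' (snd t) j' end
  end.

Lemma from_to k g j : (j < k)%coq_nat -> fromTn k (toTn k g) j = g j.
Proof.
elim: k g j => [|k IH] g j Hj; first lia.
case: j Hj => [|j] Hj //=; rewrite IH //; lia.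
Qed.

Lemma bounded_to k a b g : (forall j, (j < k)%coq_nat -> a <= g j <= b) ->
  Compactness.bounded_n k (toTn k (fun _ => a)) (toTn k (fun _ => b)) (toTn k g).
Proof.
elim: k g => [|k IH] g Hg //=; split.
  apply: Hg; lia.
apply: IH => j Hj; apply: Hg; lia.
Qed.

Lemma close_from k d x t : Compactness.close_n k d x t ->
  forall j, (j < k)%coq_nat -> Rabs (fromTn k x j - fromTn k t j) < d.
Proof.
elim: k x t => [|k IH] x t /=; first by move=> _ j Hj; lia.
case: x => x1 x2; case: t => t1 t2.
move=> [H1 H2] [|j] Hj //=; apply: IH => //; lia.
Qed.

Set Implicit Arguments.
Section Ninf.
Variable m : nat.
Notation E := ('I_m.+1 -> R).
Definition ninf (y : E) : R := \big[Rmax/0]_(i : 'I_m.+1) Rabs (y i).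

Lemma ninf_seq (r : seq 'I_m.+1) (y : E) :
  (forall i, i \in r -> Rabs (y i) <= \big[Rmax/0]_(j <- r) Rabs (y j)) /\
  0 <= \big[Rmax/0]_(j <- r) Rabs (y j) /\
  (r != [::] -> exists2 i, i \in r & Rabs (y i) = \big[Rmax/0]_(j <- r) Rabs (y j)).
Proof.
elim: r => [|a r [IH1 [IH2 IH3]]]; first by rewrite big_nil; split => //; split => //; lra.
rewrite big_cons; split; last split.
- move=> i; rewrite inE => /orP [/eqP ->|ir]; first exact: Rmax_l.
  apply: Rle_trans; [exact: IH1| exact: Rmax_r].
- apply: Rle_trans; [exact: IH2| exact: Rmax_r].
- move=> _; case: r IH1 IH2 IH3 => [|b r] IH1 IH2 IH3.
    exists a; first by rewrite inE eqxx.
    rewrite big_nil Rmax_left //; exact: Rabs_pos.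
  case: IH3 => // i ir Ei.
  rewrite /Rmax; case: Rle_dec => Hle.
    by exists i; [rewrite inE ir orbT| exact: Ei].
  by exists a; [rewrite inE eqxx|].
Qed.

Lemma ninf_ge i y : Rabs (y i) <= ninf y.
Proof. case: (ninf_seq (index_enum 'I_m.+1) y) => H _; apply: H; by rewrite mem_index_enum. Qed.

Lemma ninf_ge0 y : 0 <= ninf y.
Proof. by case: (ninf_seq (index_enum 'I_m.+1) y) => _ []. Qed.

Lemma ninf_attained y : exists i, Rabs (y i) = ninf y.
Proof.
case: (ninf_seq (index_enum 'I_m.+1) y) => _ [_ H].
case: H => [|i _ Ei]; last by exists i.
apply/eqP => E0; have : ord0 \in index_enum 'I_m.+1 by rewrite mem_index_enum.
by rewrite E0.
Qed.

Lemma ninf_sphere_pos y : sphere y -> 0 < ninf y.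
Proof.
move=> Sy; case: (Rle_lt_or_eq_dec _ _ (ninf_ge0 y)) => // E0.
have Hz : forall i, y i = 0.
  move=> i; have := ninf_ge i y; rewrite -E0 => H; have := Rabs_pos (y i).
  move=> H'; have H0 : Rabs (y i) = 0 by lra.
  by case: (Req_dec (y i) 0) => // Hn; exfalso; apply: (Rabs_no_R0 _ Hn).
move: Sy; rewrite /sphere (Rsum_ext (g := fun _ => 0)); last by move=> i; rewrite Hz; ring.
rewrite Rsum_const; lra.
Qed.

Lemma ctn_ninf (D : E -> Prop) x : ctn (@clS m) D x ninf.
Proof.
exact: (@ctn_bigop _ (@clS m) (@clS_mono m) D x _ Rmax 0 (fun a b => jcont_max a b)
  (index_enum 'I_m.+1) (fun i y => Rabs (y i)) (fun i => ctn_abs (@ctn_coord m D x i))).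
Qed.

Lemma nm_ge_coord (y : E) i : Rabs (y i) <= nm y.
Proof.
have := coord_le_euclid y (fun _ => 0) i; rewrite Rminus_0_r /euclid_dist /nm.
by rewrite (Rsum_ext (f := fun j => (y j - 0) ^ 2) (g := fun j => y j ^ 2)) // => j; rewrite Rminus_0_r.
Qed.

Lemma nm_scale (y : E) c : 0 < c -> nm (fun i => y i / c) = nm y / c.
Proof.
move=> Hc; rewrite /nm.
rewrite (Rsum_ext (g := fun i => (/ c) ^ 2 * y i ^ 2)); last by move=> i; field; lra.
rewrite Rsum_scal sqrt_mult; first last.
- exact: Rsum_sq_ge0.
- apply: pow2_ge_0.
rewrite /Rdiv Rmult_comm; congr (_ * _).
rewrite /= Rmult_1_r sqrt_square //; apply: Rlt_le; exact: Rinv_0_lt_compat.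
Qed.

Lemma sc_scale (y : E) c : 0 < c -> 0 < nm y -> sc (fun i => y i / c) = sc y.
Proof.
move=> Hc Hn; apply: functional_extensionality => i; rewrite /sc nm_scale //; field; lra.
Qed.

End Ninf.

Section UC.
Variable m : nat.
Notation E := ('I_m.+1 -> R).
Variable V : finType.
Variable f : E -> V -> R.
Hypothesis Hf : continuous_on (@sphere m) f.

Lemma Fhat_cont (T : E) : (exists i, /4 <= Rabs (T i)) -> forall eps, 0 < eps ->
  exists2 d, 0 < d & forall w, (forall i, Rabs (w i - T i) < d) -> forall v, Rabs (f (sc w) v - f (sc T) v) < eps.
Proof.
move=> [i0 Hi0] eps He.
have HnT : 0 < nm T by have := nm_ge_coord T i0; lra.
have ST := sphere_sc HnT.
case: (Hf ST He) => eta Heta Keta.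
have Hm : 0 < INR m.+1 by apply: lt_0_INR; lia.
set e1 := eta / (2 * INR m.+1).
have He1 : 0 < e1 by rewrite /e1; apply: Rdiv_lt_0_compat; lra.
have [d1 Hd1 K1] : exists2 d1, 0 < d1 & forall i w, (@clS m) T w d1 -> Rabs (sc w i - sc T i) < e1.
  apply: (fin_min (P := fun i d1 => forall w, (@clS m) T w d1 -> Rabs (sc w i - sc T i) < e1)).
    move=> i d d' Hd' Hle Hp w Cw; apply: Hp; exact: (@clS_mono m _ _ d' d Hd' Hle Cw).
  move=> i; case: (@ctn_sc m (fun _ => True) T i HnT e1 He1) => d Hd K.
  by exists d => // w Cw; apply: K.
exists (Rmin d1 (/8)); first by apply: Rmin_pos; lra.
move=> w Cw v.
have Hm1 := Rmin_l d1 (/8); have Hm2 := Rmin_r d1 (/8).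
have Hnw : 0 < nm w.
  have := nm_ge_coord w i0; have := Cw i0; move: Hi0; split_Rabs; lra.
apply: Keta; first exact: sphere_sc.
apply: clS_euclid => // i; rewrite -/e1.
apply: K1 => j; have := Cw j; lra.
Qed.

Definition Good (eps0 : R) (T : E) (d : R) :=
  0 < d /\ d <= /8 /\ ((exists i, /4 <= Rabs (T i)) ->
    forall w, (forall i, Rabs (w i - T i) < 2 * d) -> forall v, Rabs (f (sc w) v - f (sc T) v) < eps0).

Lemma exGood eps0 T : 0 < eps0 -> exists d, Good eps0 T d.
Proof.
move=> He; case: (classic (exists i, /4 <= Rabs (T i))) => HT.
  case: (Fhat_cont HT He) => d Hd K.
  exists (Rmin (d / 2) (/8)); split; first by apply: Rmin_pos; lra.
  split; first exact: Rmin_r.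
  move=> _ w Cw; apply: K => i; have := Cw i; have := Rmin_l (d/2) (/8); lra.
exists (/8); split; first lra. split; first lra. by move=> H; exfalso.
Qed.

Definition toE (t : Compactness.Tn m.+1 R) : E := fun i => fromTn m.+1 t (nat_of_ord i).

Lemma UC eps0 : 0 < eps0 -> exists N : nat, (2 <= N)%coq_nat /\
  forall y w : E, ninf y = 1 -> (forall i, Rabs (w i - y i) < / INR N) ->
    forall v, Rabs (f (sc w) v - f (sc y) v) < 2 * eps0.
Proof.
move=> He.
pose gd (t : Compactness.Tn m.+1 R) : R :=
  proj1_sig (constructive_indefinite_description _ (exGood (toE t) He)).
have gdP : forall t, Good eps0 (toE t) (gd t).
  by move=> t; rewrite /gd; case: constructive_indefinite_description.
pose gauge (t : Compactness.Tn m.+1 R) : posreal := mkposreal (gd t) (proj1 (gdP t)).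
case: (Compactness.compactness_value m.+1 (toTn m.+1 (fun _ => -2)) (toTn m.+1 (fun _ => 2)) gauge) => d Hd.
have Hdp : 0 < d by apply: cond_pos.
have [N [HN2 HN]] : exists N : nat, (2 <= N)%coq_nat /\ / d < INR N.
  have [H1 H2] := archimed (/ d).
  have Hup : (0 <= up (/ d))%Z.
    apply: le_IZR; have : 0 < / d by apply: Rinv_0_lt_compat. lra.
  exists (Z.to_nat (up (/ d))).+2; split; first lia.
  rewrite !S_INR INR_IZR_INZ Z2Nat.id //; lra.
exists N; split => // y w Hy Hw v.
have HNp : 0 < INR N by apply: lt_0_INR; lia.
have HNd : / INR N < d.
  rewrite -(Rinv_inv d); apply: Rinv_lt_contravar => //; apply: Rmult_lt_0_compat => //.
  by apply: Rinv_0_lt_compat.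
pose g (j : nat) : R := y (inord j).
have Hbox : Compactness.bounded_n m.+1 (toTn m.+1 (fun _ => -2)) (toTn m.+1 (fun _ => 2)) (toTn m.+1 g).
  apply: bounded_to => j Hj; rewrite /g.
  have := ninf_ge (inord j) y; rewrite Hy; split_Rabs; lra.
apply: NNPP => Hn; apply: (Hd _ Hbox) => [[t [Ht [Hc Hdt]]]]; apply: Hn.
have Hc' := close_from _ _ _ _ Hc.
have Hyt : forall i : 'I_m.+1, Rabs (y i - toE t i) < gd t.
  move=> i; have := Hc' i (ltP (ltn_ord i)); rewrite from_to; last exact/ltP.
  by rewrite /g inord_val.
case: (gdP t) => Hg0 [Hg8 Hgood].
have Hant : exists i, /4 <= Rabs (toE t i).
  case: (ninf_attained y) => i0 Hi0; exists i0.
  have := Hyt i0; rewrite Hy in Hi0; have := Hg8; move: Hi0; split_Rabs; lra.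
have Hdt' : d <= gd t by exact: Hdt.
have E1 := Hgood Hant y (fun i => ltac:(have := Hyt i; lra)) v.
have E2 := Hgood Hant w (fun i => ltac:(have := Hyt i; have := Hw i; split_Rabs; lra)) v.
move: E1 E2; split_Rabs; lra.
Qed.

End UC.

Lemma up_int k : up (IZR k) = (k + 1)%Z.
Proof.
have [H1 H2] := archimed (IZR k).
have A : (k < up (IZR k))%Z by apply: lt_IZR.
have B : (up (IZR k) <= k + 1)%Z by apply: le_IZR; rewrite plus_IZR; lra.
lia.
Qed.

Lemma fl_spec (r : R) : IZR (up r - 1) <= r < IZR (up r - 1) + 1.
Proof. have [H1 H2] := archimed r; rewrite minus_IZR; lra. Qed.

Lemma sum_eq_pw (I : finType) (F G : I -> nat) k :
  (forall i, (G i <= F i)%N) -> (\sum_i F i = \sum_i G i)%N -> F k = G k.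
Proof.
move=> Hle Hs.
move: Hs; rewrite (bigD1 k) //= (bigD1 k (P := predT)) //=.
have : (\sum_(i | i != k) G i <= \sum_(i | i != k) F i)%N by apply: leq_sum => i _.
have := Hle k; lia.
Qed.

Section Count.
Variable m N : nat.
Notation E := ('I_m.+1 -> R).
Definition Gt := {ffun 'I_m.+1 -> 'I_(2 * N).+3}.
Definition zr (z : Gt) (i : 'I_m.+1) : R := INR (z i) - INR N.+1.
Definition wz (z : Gt) (uu : E) (o : option 'I_m.+1) : R :=
  match o with None => 0 | Some i => uu i - zr z i end.
Definition hat (z : Gt) (uu : E) : R :=
  \big[Rmult/R1]_(ab : option 'I_m.+1 * option 'I_m.+1) Rmax 0 (1 - (wz z uu ab.1 - wz z uu ab.2)).

Lemma hat_ge0 z uu : 0 <= hat z uu.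
Proof. rewrite /hat; apply: (big_ind (fun x => 0 <= x)); [lra| move=> *; nra| move=> ab _; exact: Rmax_l]. Qed.

Lemma hat_pos_iff z uu : 0 < hat z uu <-> forall a b, wz z uu a - wz z uu b < 1.
Proof.
split.
  move=> Hp a b; apply: Rnot_le_lt => Hab.
  move: Hp; rewrite /hat (bigD1 (a, b)) //= Rmax_left; last lra.
  rewrite Rmult_0_l; lra.
move=> H; rewrite /hat; apply: (big_ind (fun x => 0 < x)); [lra| move=> *; nra|].
move=> [a b] _ /=; rewrite Rmax_right; have := H a b; lra.
Qed.

Lemma zr_int (z : Gt) i : zr z i = IZR (Z.of_nat (z i) - Z.of_nat N.+1).
Proof. by rewrite /zr minus_IZR -!INR_IZR_INZ. Qed.

Definition fl (uu : E) i : Z := (up (uu i) - 1)%Z.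
Definition cc (uu : E) i : nat := Z.to_nat (fl uu i + Z.of_nat N.+1).

Lemma zmem_coord z uu i : 0 < hat z uu ->
  (Z.of_nat (z i) - Z.of_nat N.+1 = fl uu i \/ Z.of_nat (z i) - Z.of_nat N.+1 = fl uu i + 1)%Z.
Proof.
move/hat_pos_iff => H.
have H1 := H (Some i) None; have H2 := H None (Some i); simpl in H1, H2.
have [F1 F2] := fl_spec (uu i).
rewrite zr_int in H1 H2.
set q := (Z.of_nat (z i) - Z.of_nat N.+1)%Z in H1 H2 *.
rewrite -/(fl uu i) in F1 F2.
have A : (fl uu i - 1 < q)%Z by apply: lt_IZR; rewrite minus_IZR; lra.
have B : (q < fl uu i + 2)%Z by apply: lt_IZR; rewrite plus_IZR; lra.
lia.
Qed.

Lemma zmem_cc z uu i : 0 < hat z uu -> (cc uu i <= z i <= (cc uu i).+1)%N.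
Proof. move=> Hp; have := zmem_coord i Hp; rewrite /cc; lia. Qed.

Lemma zmem_cc0 z uu i0 k : uu i0 = IZR k -> 0 < hat z uu -> z i0 = cc uu i0 :> nat.
Proof.
move=> Hk /hat_pos_iff H.
have H1 := H (Some i0) None; have H2 := H None (Some i0); simpl in H1, H2.
rewrite zr_int Hk in H1 H2.
have A : (k - 1 < Z.of_nat (z i0) - Z.of_nat N.+1)%Z by apply: lt_IZR; rewrite minus_IZR; lra.
have B : (Z.of_nat (z i0) - Z.of_nat N.+1 < k + 1)%Z by apply: lt_IZR; rewrite plus_IZR; lra.
rewrite /cc /fl Hk up_int; lia.
Qed.

Lemma chain z z' uu j k : 0 < hat z uu -> 0 < hat z' uu -> (z' k < z k)%N -> (z j < z' j)%N -> False.
Proof.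
move=> /hat_pos_iff H /hat_pos_iff H' Hk Hj.
have A := H (Some j) (Some k); have B := H' (Some k) (Some j); simpl in A, B.
have Ck : INR (z' k) + 1 <= INR (z k) by rewrite -S_INR; apply: le_INR; apply/leP.
have Cj : INR (z j) + 1 <= INR (z' j) by rewrite -S_INR; apply: le_INR; apply/leP.
rewrite /zr in A B; lra.
Qed.

Definition key (uu : E) (z : Gt) : nat := (\sum_(i < m.+1) (z i - cc uu i))%N.

Lemma key_le z uu i0 k : uu i0 = IZR k -> 0 < hat z uu -> (key uu z <= m)%N.
Proof.
move=> Hk Hp; rewrite /key (bigD1 i0) //=.
rewrite (zmem_cc0 Hk Hp) subnn add0n.
apply: (@leq_trans (\sum_(i < m.+1 | i != i0) 1)%N).
  apply: leq_sum => i _; have := zmem_cc i Hp; lia.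
rewrite sum1_card cardC1 card_ord //.
Qed.

Lemma key_inj z z' uu : 0 < hat z uu -> 0 < hat z' uu -> key uu z = key uu z' -> z = z'.
Proof.
move=> Hz Hz' Hkey; apply/ffunP => k; apply: val_inj => /=.
case: (ltngtP (z k) (z' k)) => // Hlt.
- have Hpw : forall j, (z j - cc uu j <= z' j - cc uu j)%N.
    move=> j; case: (ltnP (z' j) (z j)) => Hj.
      by exfalso; apply: (chain Hz' Hz Hlt Hj).
    lia.
  have := sum_eq_pw (F := fun j => (z' j - cc uu j)%N) (G := fun j => (z j - cc uu j)%N) k Hpw.
  rewrite /key in Hkey; move=> /(_ (esym Hkey)).
  have := zmem_cc k Hz; have := zmem_cc k Hz'; lia.
- have Hpw : forall j, (z' j - cc uu j <= z j - cc uu j)%N.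
    move=> j; case: (ltnP (z j) (z' j)) => Hj.
      by exfalso; apply: (chain Hz Hz' Hlt Hj).
    lia.
  have := sum_eq_pw (F := fun j => (z j - cc uu j)%N) (G := fun j => (z' j - cc uu j)%N) k Hpw.
  rewrite /key in Hkey; move=> /(_ Hkey).
  have := zmem_cc k Hz; have := zmem_cc k Hz'; lia.
Qed.

Lemma count_Zu uu i0 k : uu i0 = IZR k -> (#|[set z : Gt | ltb 0 (hat z uu)]| <= m.+1)%N.
Proof.
move=> Hk.
have Hinj : {in [set z : Gt | ltb 0 (hat z uu)] &, injective (fun z => inord (key uu z) : 'I_m.+1)}.
  move=> z z'; rewrite !inE => /ltbP Hz /ltbP Hz' E.
  apply: (key_inj Hz Hz').
  have Kz := key_le Hk Hz; have Kz' := key_le Hk Hz'.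
  by move: (congr1 (@nat_of_ord _) E); rewrite !inordK ?ltnS.
have := @leq_card_in _ _ (fun z : Gt => inord (key uu z) : 'I_m.+1) _ Hinj; by rewrite card_ord.
Qed.

End Count.

Section Psi.
Variable m : nat.
Notation E := ('I_m.+1 -> R).
Variable V : finType.
Variable K : {set V} -> Prop.
Variable f : E -> V -> R.
Hypothesis Hf : continuous_on (@sphere m) f.
Hypothesis Hreal : forall x, sphere x -> realization K (f x).

Definition uu (N : nat) (y : E) : E := fun i => INR N * y i / ninf y.
Definition wpt (N : nat) (z : Gt m N) : E := fun i => zr z i / INR N.
Definition Fz (N : nat) (v0 : V) (z : Gt m N) : V :=
  epsilon (inhabits v0) (fun v => / INR #|V| <= f (sc (wpt z)) v).
Definition Psi (N : nat) (v0 : V) (y : E) (v : V) : R :=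
  Rsum (fun z : Gt m N => if Fz v0 z == v then @hat m N z (uu N y) else 0) / Rsum (fun z : Gt m N => @hat m N z (uu N y)).

Lemma ninf_one (y : E) i0 : (forall i, Rabs (y i) <= 1) -> Rabs (y i0) = 1 -> ninf y = 1.
Proof.
move=> H1 H2; have := ninf_ge i0 y; case: (ninf_attained y) => j Hj; have := H1 j; lra.
Qed.

Lemma uu_bound N x i : sphere x -> Rabs (uu N x i) <= INR N.
Proof.
move=> Sx; have Hc := ninf_sphere_pos Sx.
rewrite /uu /Rdiv Rabs_mult Rabs_mult (Rabs_right (INR N)); last by apply: Rle_ge; apply: pos_INR.
rewrite Rabs_inv (Rabs_right (ninf x)); last lra.
have := ninf_ge i x; have := pos_INR N => HN Hi.
rewrite Rmult_assoc; rewrite -{2}(Rmult_1_r (INR N)); apply: Rmult_le_compat_l => //.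
apply: (Rmult_le_reg_r (ninf x)) => //; rewrite Rmult_assoc Rinv_l; lra.
Qed.

Lemma uu_int N x : sphere x -> exists i0 k, uu N x i0 = IZR k.
Proof.
move=> Sx; have Hc := ninf_sphere_pos Sx.
case: (ninf_attained x) => i0 Hi0; exists i0.
rewrite /uu; case: (Rle_or_lt 0 (x i0)) => Hs.
  exists (Z.of_nat N); rewrite -INR_IZR_INZ; move: Hi0; rewrite Rabs_right; last lra.
  move=> ->; field; lra.
exists (- Z.of_nat N)%Z; rewrite opp_IZR -INR_IZR_INZ; move: Hi0; rewrite Rabs_left //.
move=> E0; have -> : x i0 = - ninf x by lra. field; lra.
Qed.

Lemma den_pos N x : (1 <= N)%coq_nat -> sphere x -> 0 < Rsum (fun z : Gt m N => @hat m N z (uu N x)).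
Proof.
move=> HN Sx.
set u := uu N x.
pose c (i : 'I_m.+1) : nat := Z.to_nat (fl u i + Z.of_nat N.+1).
have Hc : forall i, (c i < (2 * N).+3)%N /\ INR (c i) - INR N.+1 = IZR (fl u i).
  move=> i; have := @uu_bound N x i Sx; rewrite -/u => Hb.
  have [F1 F2] := fl_spec (u i); rewrite -/(fl u i) in F1 F2.
  have A : (- Z.of_nat N <= fl u i)%Z.
    have G : IZR (- Z.of_nat N - 1) < IZR (fl u i).
      rewrite minus_IZR opp_IZR -INR_IZR_INZ; move: Hb; split_Rabs; lra.
    have := lt_IZR _ _ G; lia.
  have B : (fl u i <= Z.of_nat N)%Z.
    apply: le_IZR; rewrite -INR_IZR_INZ; move: Hb; split_Rabs; lra.
  split.
    apply/ltP; rewrite /c; lia.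
  rewrite /c INR_IZR_INZ Z2Nat.id; last lia.
  rewrite plus_IZR -INR_IZR_INZ; ring.
pose z0 : Gt m N := [ffun i => inord (c i)].
have Hz0 : forall i, zr z0 i = IZR (fl u i).
  move=> i; rewrite /zr /z0 ffunE inordK; first by case: (Hc i).
  by case: (Hc i).
have Hp : 0 < hat z0 u.
  apply/hat_pos_iff => a b.
  have Hw : forall o, 0 <= wz z0 u o < 1.
    case=> [i|] /=; last lra.
    rewrite Hz0; have [F1 F2] := fl_spec (u i); rewrite -/(fl u i) in F1 F2; lra.
  have := Hw a; have := Hw b; lra.
apply: (Rlt_le_trans _ (hat z0 u)) => //.
apply: (Rsum_term (f := fun z => hat z u)) => z; exact: hat_ge0.
Qed.


Lemma Psi_num_sum N v0 x :
  Rsum (fun v => Rsum (fun z : Gt m N => if Fz v0 z == v then @hat m N z (uu N x) else 0)) =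
  Rsum (fun z : Gt m N => @hat m N z (uu N x)).
Proof.
rewrite /Rsum exchange_big /=; apply: eq_bigr => z _.
rewrite (bigD1 (Fz v0 z)) //= eqxx big1; first by rewrite Rplus_0_r.
by move=> v /negbTE; rewrite eq_sym => ->.
Qed.

Lemma Psi_sum N v0 x : (1 <= N)%coq_nat -> sphere x -> Rsum (Psi N v0 x) = 1.
Proof.
move=> HN Sx; have Hd := den_pos HN Sx.
rewrite /Psi (Rsum_ext (g := fun v => / Rsum (fun z : Gt m N => @hat m N z (uu N x)) *
   Rsum (fun z : Gt m N => if Fz v0 z == v then @hat m N z (uu N x) else 0))); last by move=> v; rewrite /Rdiv Rmult_comm.
rewrite Rsum_scal Psi_num_sum; field; lra.
Qed.

Lemma Psi_ge0 N v0 x v : (1 <= N)%coq_nat -> sphere x -> 0 <= Psi N v0 x v.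
Proof.
move=> HN Sx; have Hd := den_pos HN Sx; rewrite /Psi.
apply: Rmult_le_pos; last by apply: Rlt_le; apply: Rinv_0_lt_compat.
apply: Rsum_ge0 => z; case: (_ == _); [exact: hat_ge0| lra].
Qed.

Lemma Psi_nz N v0 x v : Psi N v0 x v <> 0 -> exists z, Fz v0 z = v /\ 0 < @hat m N z (uu N x).
Proof.
move=> Hn; apply: NNPP => Hno; apply: Hn.
rewrite /Psi /Rsum big1 ?Rdiv_0_l // => z _.
case: eqP => // Hz; case: (Rle_lt_or_eq_dec _ _ (hat_ge0 z (uu N x))) => // Hp.
by exfalso; apply: Hno; exists z.
Qed.

Lemma ctn_uu N x i (D : E -> Prop) : 0 < ninf x -> ctn (@clS m) D x (fun y => uu N y i).
Proof.
move=> Hc; rewrite /uu; apply: ctn_div; first exact: (@clS_mono m). lra.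
  apply: ctn_mult; [exact: (@clS_mono m)| exact: ctn_const| exact: ctn_coord].
exact: ctn_ninf.
Qed.

Lemma ctn_hat N (z : Gt m N) x (D : E -> Prop) : 0 < ninf x -> ctn (@clS m) D x (fun y => @hat m N z (uu N y)).
Proof.
move=> Hc; rewrite /hat; apply: ctn_Rprod; first exact: (@clS_mono m).
move=> [a b] /=.
have Hw : forall o, ctn (@clS m) D x (fun y => wz z (uu N y) o).
  case=> [i|] /=; last exact: ctn_const.
  apply: ctn_minus; [exact: (@clS_mono m)| exact: ctn_uu| exact: ctn_const].
apply: ctn_max; [exact: (@clS_mono m)| exact: ctn_const|].
apply: ctn_minus; [exact: (@clS_mono m)| exact: ctn_const|].
apply: ctn_minus; [exact: (@clS_mono m)| exact: Hw| exact: Hw].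
Qed.

Lemma Psi_ctn N v0 x v : (1 <= N)%coq_nat -> sphere x -> ctn (@clS m) (@sphere m) x (fun y => Psi N v0 y v).
Proof.
move=> HN Sx; have Hd := den_pos HN Sx; have Hc := ninf_sphere_pos Sx.
apply: ctn_div; first exact: (@clS_mono m). lra.
  apply: ctn_Rsum; first exact: (@clS_mono m).
  move=> z; case: (_ == _); [exact: ctn_hat| exact: ctn_const].
apply: ctn_Rsum; first exact: (@clS_mono m).
move=> z; exact: ctn_hat.
Qed.

End Psi.

Section PsiMain.
Variable m : nat.
Notation E := ('I_m.+1 -> R).
Variable V : finType.
Variable K : {set V} -> Prop.
Variable f : E -> V -> R.
Hypothesis Hf : continuous_on (@sphere m) f.
Hypothesis Hreal : forall x, sphere x -> realization K (f x).

Lemma Fz_supp N v0 (HN : (2 <= N)%coq_nat)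
  (HU : forall y w : E, ninf y = 1 -> (forall i, Rabs (w i - y i) < / INR N) ->
          forall v, Rabs (f (sc w) v - f (sc y) v) < 2 * / (2 * INR #|V|))
  x (z : Gt m N) : sphere x -> 0 < hat z (uu N x) -> 0 < f x (Fz f v0 z).
Proof.
move=> Sx Hp.
have Hc := ninf_sphere_pos Sx.
have HNp : 0 < INR N by apply: lt_0_INR; lia.
have HN2 : 2 <= INR N by apply: (le_INR 2); lia.
set c := ninf x in Hc.
set y : E := fun i => x i / c.
case: (ninf_attained x) => i0 Hi0.
have Hy1 : ninf y = 1.
  apply: (ninf_one (i0 := i0)).
    move=> i; rewrite /y /Rdiv Rabs_mult Rabs_inv (Rabs_right c); last lra.
    apply: (Rmult_le_reg_r c) => //; rewrite Rmult_assoc Rinv_l; last lra.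
    rewrite Rmult_1_r Rmult_1_l; exact: ninf_ge.
  rewrite /y /Rdiv Rabs_mult Rabs_inv (Rabs_right c); last lra.
  rewrite Hi0 -/c; field; lra.
have Huy : forall i, uu N x i = INR N * y i by move=> i; rewrite /uu /y -/c; field; lra.
move/hat_pos_iff: Hp => Hp.
set w := wpt z.
have Hwy : forall i, Rabs (w i - y i) < / INR N.
  move=> i; have H1 := Hp (Some i) None; have H2 := Hp None (Some i); simpl in H1, H2.
  rewrite Huy in H1 H2.
  have -> : w i - y i = / INR N * (zr z i - INR N * y i) by rewrite /w /wpt; field; lra.
  rewrite Rabs_mult Rabs_right; last by apply: Rle_ge; apply: Rlt_le; apply: Rinv_0_lt_compat.
  rewrite -{2}(Rmult_1_r (/ INR N)); apply: Rmult_lt_compat_l; first by apply: Rinv_0_lt_compat.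
  split_Rabs; lra.
have Hsy : sc y = x.
  rewrite /y sc_scale //; first exact: sc_sphere.
  rewrite (nm_sphere Sx); lra.
have Hnw : 0 < nm w.
  have := nm_ge_coord w i0; have := Hwy i0.
  have : Rabs (y i0) = 1 by rewrite /y /Rdiv Rabs_mult Rabs_inv (Rabs_right c); [rewrite Hi0 -/c; field|]; lra.
  have : / INR N <= / 2 by apply: Rinv_le_contravar; lra.
  move=> A B C D; move: B C D; split_Rabs; lra.
have Sw := sphere_sc Hnw.
have [v1 Hv1] := Rsum_big_pos (proj1 (Hreal Sw)) (proj1 (proj2 (Hreal Sw))).
have HF : / INR #|V| <= f (sc w) (Fz f v0 z).
  rewrite /Fz; apply: (epsilon_spec (inhabits v0) (fun v => / INR #|V| <= f (sc (wpt z)) v)).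
  by exists v1.
have := HU y w Hy1 Hwy (Fz f v0 z); rewrite Hsy.
have -> : 2 * / (2 * INR #|V|) = / INR #|V|.
  field; apply: not_0_INR => E0; have : (0 < #|V|)%N by apply/card_gt0P; exists v1.
  by rewrite E0.
split_Rabs; lra.
Qed.

Lemma Psi_main : (1 <= m.+1)%N -> exists Psi : E -> V -> R,
  (forall x, sphere x -> forall v, ctn (@clS m) (@sphere m) x (fun y => Psi y v)) /\
  (forall x, sphere x -> realization K (Psi x)) /\
  (forall x, sphere x -> forall v, Psi x v <> 0 -> f x v <> 0) /\
  (forall x, sphere x -> (#|[set v | nzb (Psi x v)]| <= m.+1)%N).
Proof.
move=> _.
set e0 : E := fun i => if i == ord0 then 1 else 0.
have Se0 : sphere e0.
  rewrite /sphere /Rsum (bigD1 ord0) //= big1 /e0 ?eqxx; first ring.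
  by move=> i /negbTE ->; ring.
have [v0 _] := Rsum_big_pos (proj1 (Hreal Se0)) (proj1 (proj2 (Hreal Se0))).
have HV : 0 < INR #|V| by apply: lt_0_INR; apply/ltP; apply/card_gt0P; exists v0.
have He0 : 0 < / (2 * INR #|V|) by apply: Rinv_0_lt_compat; lra.
case: (UC Hf He0) => N [HN HU].
have HN1 : (1 <= N)%coq_nat by lia.
exists (Psi f N v0); split; last split; last split.
- move=> x Sx v; exact: Psi_ctn.
- move=> x Sx; case: (Hreal Sx) => _ [_ [s Ks Hs]].
  split; first by move=> v; apply: Psi_ge0.
  split; first exact: Psi_sum.
  exists s => // v Hv; apply: Hs.
  case: (Psi_nz Hv) => z [<- Hz].
  have := @Fz_supp N v0 HN HU x z Sx Hz; lra.
- move=> x Sx v Hv; case: (Psi_nz Hv) => z [<- Hz].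
  have := @Fz_supp N v0 HN HU x z Sx Hz; lra.
- move=> x Sx.
  case: (uu_int N Sx) => i0 [k Hk].
  apply: leq_trans (@count_Zu m N (uu N x) i0 k Hk).
  apply: leq_trans (leq_imset_card (Fz f v0) _).
  apply: subset_leq_card; apply/subsetP => v; rewrite inE => /nzbP Hv.
  case: (Psi_nz Hv) => z [<- Hz]; apply/imsetP; exists z => //.
  by rewrite inE; apply/ltbP.
Qed.

End PsiMain.

Section StageCont.
Variable n : nat.
Variable S : {set edges n}.
Hypothesis HS : S != set0.
Hypothesis HG : forall G, G \in S -> is_graph G.
Notation V := (vertex n).
Variable X : Type.
Variable cl : X -> X -> R -> Prop.
Hypothesis clmono : forall x y d d', 0 < d -> d <= d' -> cl x y d -> cl x y d'.
Variable D : X -> Prop.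
Variable x0 : X.
Variable A : X -> V -> R.
Hypothesis HA : forall v, ctn cl D x0 (fun p => A p v).
Variable sg : X -> R.
Hypothesis Hsg : ctn cl D x0 sg.

Lemma ctn_tcol q : ctn cl D x0 (fun p => tcol (A p) q).
Proof. by apply: ctn_Rsum => // w; apply: HA. Qed.

Lemma ctn_thr v : ctn cl D x0 (fun p => thr (sg p) (A p) v).
Proof.
rewrite /thr; apply: ctn_plus => //.
  apply: ctn_max => //; [exact: ctn_const| apply: ctn_minus => //].
case: (v.2 == setT); last exact: ctn_const.
apply: ctn_max => //; [exact: ctn_const| apply: ctn_minus => //; exact: ctn_tcol].
Qed.

Lemma ctn_Tn v : realization (Kc S) (A x0) -> 0 <= sg x0 -> INR n * sg x0 <= / 2 ->
  ctn cl D x0 (fun p => Tn (sg p) (A p) v).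
Proof.
move=> Ha H1 H2; have Hlb := thr_sum_lb Ha H1 H2.
rewrite /Tn; apply: ctn_div => //; first lra.
  exact: ctn_thr.
by apply: ctn_Rsum => // u; apply: ctn_thr.
Qed.

Lemma ctn_drain v q : realization (Kc S) (A x0) -> 0 < A x0 (q, setT) -> sg x0 <= 1 ->
  ctn cl D x0 (fun p => drain (sg p) (A p) v).
Proof.
move=> Ha Hq Hs.
have Hd := drain_den (proj1 Ha) Hq Hs.
have Hdc : forall u, ctn cl D x0 (fun p => dcoef (sg p) u * A p u).
  move=> u; apply: ctn_mult => //; rewrite /dcoef; case: (u.2 == setT); first exact: ctn_const.
  by apply: ctn_minus => //; exact: ctn_const.
rewrite /drain; apply: ctn_div => //; first lra.
by apply: ctn_Rsum.
Qed.

Lemma ctn_lin (B : X -> V -> R) v : (forall u, ctn cl D x0 (fun p => B p u)) ->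
  ctn cl D x0 (fun p => lin (sg p) (A p) (B p) v).
Proof.
move=> HB; rewrite /lin; apply: ctn_plus => //; apply: ctn_mult => //.
by apply: ctn_minus => //; exact: ctn_const.
Qed.

End StageCont.

Lemma bary_real n (S : {set edges n}) : S != set0 -> (0 < n)%N -> realization (Kc S) (bary (n:=n)).
Proof.
move=> HS Hn.
have HnR : 0 < INR n by apply: lt_0_INR; apply/ltP.
apply/realP; split.
  by move=> v; rewrite /bary; case: (v.2 == setT); [apply: Rlt_le; apply: Rinv_0_lt_compat|]; lra.
split; first exact: bary_sum.
apply: good_sub (good_full HS); apply/subsetP => [[p w]]; rewrite in_supp => /nzbP.
rewrite /bary /=; case: eqP => [->|_]; first by move=> _; apply/imsetP; exists p.
by [].
Qed.

Lemma Tn0 n (a : vertex n -> R) : (forall v, 0 <= a v) -> Rsum a = 1 -> Tn 0 a = a.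
Proof.
move=> H0 H1.
have Hthr : forall v, thr 0 a v = a v.
  move=> v; rewrite /thr Rminus_0_r Rmax_right; last exact: H0.
  case: (v.2 == setT); last ring.
  rewrite Rmax_left; first ring.
  have := tcol_ge0 v.1 H0; lra.
apply: functional_extensionality => v; rewrite /Tn Hthr (Rsum_ext Hthr) H1; field.
Qed.

Lemma drain0 n (a : vertex n -> R) : Rsum a = 1 -> drain 0 a = a.
Proof.
move=> H1; apply: functional_extensionality => v.
have Hd : forall u, dcoef 0 u * a u = a u by move=> u; rewrite /dcoef; case: (u.2 == setT); ring.
rewrite /drain Hd (Rsum_ext Hd) H1; field.
Qed.

Lemma lin0 n (a b : vertex n -> R) : lin 0 a b = a.
Proof. apply: functional_extensionality => v; rewrite /lin; ring. Qed.
Lemma lin1 n (a b : vertex n -> R) : lin 1 a b = b.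
Proof. apply: functional_extensionality => v; rewrite /lin; ring. Qed.

Theorem theorem4 (n : nat) (S : {set edges n}) :
  S != set0 ->
  (forall G, G \in S -> is_graph G) ->
  k_connected (unint_complex (closed_above_allowed S)) (Z.of_nat n - 2)%Z.
Proof.
move=> HS HG.
change (unint_complex (closed_above_allowed S)) with (Kc S).
split.
  move=> Hk; exists (bary (n:=n)); apply: bary_real => //.
  apply/ltP; lia.
move=> m Hm f Hf Hreal.
have Hnm : (m.+2 <= n)%coq_nat by lia.
have Hn : (0 < n)%N by apply/ltP; lia.
have HnR : 0 < INR n by apply: lt_0_INR; lia.
have [Psi [Pc [Pr [Pf Pcard]]]] := Psi_main Hf Hreal (isT : (1 <= m.+1)%N).
have Hmiss : forall x, sphere x -> exists q, forall w, Psi x (q, w) = 0.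
  move=> x Sx; set T := [set v | nzb (Psi x v)].
  have HT := Pcard x Sx; rewrite -/T in HT.
  have Hns : ~~ ([set: 'I_n] \subset [set v.1 | v in T]).
    apply/negP => Hsub; have := subset_leq_card Hsub.
    rewrite cardsT card_ord => H1; have := leq_imset_card (fun v : vertex n => v.1) T.
    move=> H2; have : (n <= m.+1)%N by apply: leq_trans H1 (leq_trans H2 HT).
    move/leP; lia.
  case/subsetPn: Hns => q _ Hq; exists q => w; apply: NNPP => Hw; apply: (negP Hq).
  by apply/imsetP; exists (q, w) => //; rewrite inE; apply/nzbP.
set dl := / (2 * INR n).
have Hdl : 0 < dl by rewrite /dl; apply: Rinv_0_lt_compat; lra.
have Hndl : INR n * dl = / 2 by rewrite /dl; field; lra.
pose HA := fun x s => lin s (f x) (Psi x).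
pose HB := fun x s => Tn (dl * s) (Psi x).
pose HC := fun x s => drain s (Tn dl (Psi x)).
pose HD := fun x s => lin s (drain 1 (Tn dl (Psi x))) (bary (n:=n)).
have RT : forall x, sphere x -> realization (Kc S) (Tn dl (Psi x)).
  move=> x Sx; apply: Tn_real; [exact: Pr| lra| lra].
have PT : forall x, sphere x -> exists q, 0 < Tn dl (Psi x) (q, setT).
  move=> x Sx; case: (Hmiss x Sx) => q Hq; exists q; apply: Tn_Pi => //; [exact: Pr| lra].
have RD1 : forall x, sphere x -> realization (Kc S) (drain 1 (Tn dl (Psi x))).
  move=> x Sx; case: (PT x Sx) => q Hq; apply: (drain_real (RT x Sx) Hq); lra.
have Lf : forall x s, DH (x, s) -> forall v, ctn (@clH m) (@DH m) (x, s) (fun p => f p.1 v).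
  move=> x s [/= Sx Hs] v; exact: (ctn_liftH (h := fun y => f y v) Hs (ctn_of_cont Hf Sx v)).
have LP : forall x s, DH (x, s) -> forall v, ctn (@clH m) (@DH m) (x, s) (fun p => Psi p.1 v).
  move=> x s [/= Sx Hs] v; exact: (ctn_liftH (h := fun y => Psi y v) Hs (Pc x Sx v)).
have LT : forall x s, DH (x, s) -> forall v, ctn (@clH m) (@DH m) (x, s) (fun p => Tn dl (Psi p.1) v).
  move=> x s Dxs v.
  exact: (ctn_Tn (@clH_mono m) (A := fun p => Psi p.1) (LP x s Dxs) (sg := fun _ => dl)
           (ctn_const _ _ _ _) v (Pr x (proj1 Dxs)) (Rlt_le _ _ Hdl) (Req_le _ _ Hndl)).
have LD1 : forall x s, DH (x, s) -> forall v, ctn (@clH m) (@DH m) (x, s) (fun p => drain 1 (Tn dl (Psi p.1)) v).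
  move=> x s Dxs v; case: (PT x (proj1 Dxs)) => q Hq.
  exact: (ctn_drain (@clH_mono m) (A := fun p => Tn dl (Psi p.1)) (LT x s Dxs) (sg := fun _ => 1)
           (ctn_const _ _ _ _) v (RT x (proj1 Dxs)) Hq (Rle_refl 1)).
have OKA : HomOK (Kc S) HA.
  split.
    move=> x s Dxs v.
    exact: (ctn_lin (@clH_mono m) (A := fun p => f p.1) (Lf x s Dxs) (sg := fun p => p.2) (@ctn_sndH m x s)
              (B := fun p => Psi p.1) v (LP x s Dxs)).
  move=> x s [/= Sx Hs].
  case: (Hreal x Sx) => Hf0 [Hf1 [s0 Ks0 Hs0]].
  case: (Pr x Sx) => Hp0 [Hp1 _].
  split.
    move=> v; rewrite /HA /lin; have := Hf0 v; have := Hp0 v; nra.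
  split.
    by rewrite /HA /lin Rsum_plus !Rsum_scal Hf1 Hp1; ring.
  exists s0 => // v Hv; apply: Hs0 => Hfv; apply: Hv.
  have Hpv : Psi x v = 0 by apply: NNPP => Hne; apply: (Pf x Sx v Hne).
  by rewrite /HA /lin Hfv Hpv; ring.
have OKB : HomOK (Kc S) HB.
  split.
    move=> x s Dxs v.
    have Hs := proj2 Dxs; simpl in Hs.
    have Hsg : ctn (@clH m) (@DH m) (x, s) (fun p => dl * p.2).
      by apply: ctn_mult; [exact: (@clH_mono m)| exact: ctn_const| exact: ctn_sndH].
    exact: (ctn_Tn (@clH_mono m) (A := fun p => Psi p.1) (LP x s Dxs) Hsg v (Pr x (proj1 Dxs))
              ltac:(simpl; nra) ltac:(simpl; rewrite -Rmult_assoc Hndl; nra)).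
  move=> x s [/= Sx Hs]; apply: Tn_real; [exact: Pr| nra| rewrite -Rmult_assoc Hndl; nra].
have OKC : HomOK (Kc S) HC.
  split.
    move=> x s Dxs v; case: (PT x (proj1 Dxs)) => q Hq.
    have Hs := proj2 Dxs; simpl in Hs.
    exact: (ctn_drain (@clH_mono m) (A := fun p => Tn dl (Psi p.1)) (LT x s Dxs) (sg := fun p => p.2)
             (@ctn_sndH m x s) v (RT x (proj1 Dxs)) Hq (proj2 Hs)).
  move=> x s [/= Sx Hs]; case: (PT x Sx) => q Hq; exact: (drain_real (RT x Sx) Hq).
have OKD : HomOK (Kc S) HD.
  split.
    move=> x s Dxs v.
    exact: (ctn_lin (@clH_mono m) (A := fun p => drain 1 (Tn dl (Psi p.1))) (LD1 x s Dxs) (sg := fun p => p.2)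
              (@ctn_sndH m x s) (B := fun _ => bary (n:=n)) v (fun u => ctn_const _ _ _ _)).
  move=> x s [/= Sx Hs]; apply: lin_real => //; [exact: RD1| exact: drain1_supp].
have J1 : forall x, sphere x -> HA x 1 = HB x 0.
  move=> x Sx; rewrite /HA /HB lin1 Rmult_0_r Tn0 //; [exact: (proj1 (Pr x Sx))| exact: (proj1 (proj2 (Pr x Sx)))].
have J2 : forall x, sphere x -> HB x 1 = HC x 0.
  move=> x Sx; rewrite /HB /HC Rmult_1_r drain0 //; exact: (proj1 (proj2 (RT x Sx))).
have J3 : forall x, sphere x -> HC x 1 = HD x 0.
  by move=> x Sx; rewrite /HC /HD lin0.
have OKAB := concat_ok OKA OKB J1.
have OKCD := concat_ok OKC OKD J3.
have J : forall x, sphere x -> concat HA HB x 1 = concat HC HD x 0.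
  move=> x Sx; rewrite /concat.
  destruct (Rle_dec 1 (/2)) as [Hq|Hq]; first lra.
  destruct (Rle_dec 0 (/2)) as [Hq'|Hq']; last lra.
  by rewrite Rmult_0_r -J2 //; congr HB; ring.
have OK := concat_ok OKAB OKCD J.
apply: (extend OK).
  move=> x Sx; rewrite /concat.
  destruct (Rle_dec 0 (/2)) as [Hq|Hq]; last lra.
  destruct (Rle_dec (2 * 0) (/2)) as [Hq'|Hq']; last lra.
  simpl; rewrite !Rmult_0_r /HA lin0 //.
move=> x Sx; rewrite /concat.
destruct (Rle_dec 1 (/2)) as [Hq|Hq]; first lra.
destruct (Rle_dec (2 * 1 - 1) (/2)) as [Hq'|Hq']; first lra.
simpl; replace (2 * (2 * 1 - 1) - 1) with 1 by ring.
by rewrite /HD lin1.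
Qed.
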